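(* Let $d\ge 1$ be an integer and, for $t\ge 0$, let $N_t$ be the number of vertices of the $t$-iterated line digraph $L^t(CK(d,4))$. Then $$N_t=\alpha\left(\frac{d-1+\sqrt{d^2-2d+5}}{2}\right)^t+\beta\left(\frac{d-1-\sqrt{d^2-2d+5}}{2}\right)^t,$$ where $\alpha=\frac12 d(d+1)\left(d^2-d+1+\frac{d^3-2d^2+4d-1}{\sqrt{d^2-2d+5}}\right)$ and $\beta=\frac12 d(d+1)\left(d^2-d+1-\frac{d^3-2d^2+4d-1}{\sqrt{d^2-2d+5}}\right)$. Moreover, if $d=2$, then $N_0=18$, $N_1=30$ and $N_t=N_{t-1}+N_{t-2}$ for all $t\ge 2$.
   Context: Let $\Sigma=\{0,1,\dots,d\}$. The cyclic Kautz digraph $CK(d,\ell)$ has as vertices all sequences $a_1\ldots a_\ell\in\Sigma^\ell$ with $a_i\neq a_{i+1}$ for $1\le i\le \ell-1$ and $a_1\neq a_\ell$, with an arc from $a_1\ldots a_\ell$ to $b_1\ldots b_\ell$ iff both are vertices and $b_i=a_{i+1}$ for $1\le i\le\ell-1$. The line digraph $L(G)$ of a digraph $G$ has as vertices the arcs of $G$, with an arc from $(u,v)$ to $(v',w)$ iff $v'=v$. $L^0(G)=G$ and $L^t(G)=L(L^{t-1}(G))$. *)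

(* Defs.v *)
From HB Require Import structures.
From mathcomp Require Import all_boot all_order all_algebra.
From mathcomp Require Import reals.
Set Implicit Arguments. Unset Strict Implicit. Unset Printing Implicit Defensive.

Record digraph := Digraph { dvert : finType; darc : rel dvert }.

Definition line_vert (G : digraph) : finType :=
  {p : dvert G * dvert G | @darc G p.1 p.2}.

Definition line_arc (G : digraph) : rel (line_vert G) :=
  fun p q => (val p).2 == (val q).1.

Definition line_digraph (G : digraph) : digraph :=
  @Digraph (line_vert G) (@line_arc G).

Definition iter_line (t : nat) (G : digraph) : digraph := iter t line_digraph G.

(* Cyclic Kautz digraph CK(d,l): alphabet {0,...,d} = 'I_(d+1); a vertex is a
   sequence a_1...a_l (0-indexed here) with a_i <> a_{i+1} and a_1 <> a_l. *)
Definition ck_ok (d l : nat) (a : l.-tuple 'I_d.+1) : bool :=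
  [forall i : 'I_l, (i.+1 < l) ==> (nth ord0 a i != nth ord0 a i.+1)]
  && (nth ord0 a 0 != nth ord0 a l.-1).

Definition ck_vert (d l : nat) : finType := {a : l.-tuple 'I_d.+1 | ck_ok a}.

Definition ck_arc (d l : nat) : rel (ck_vert d l) :=
  fun a b => [forall i : 'I_l, (i.+1 < l) ==>
                (nth ord0 (val b) i == nth ord0 (val a) i.+1)].

Definition CK (d l : nat) : digraph := @Digraph (ck_vert d l) (@ck_arc d l).

Definition Nt (d t : nat) : nat := #|dvert (iter_line t (CK d 4))|.

(* Main.v *)
Require Import Defs.
From mathcomp Require Import all_boot all_order all_algebra zify ring lra.
From mathcomp Require Import reals.
Set Implicit Arguments. Unset Strict Implicit. Unset Printing Implicit Defensive.


Lemma sum_sig (T : finType) (P : pred T) (F : T -> nat) :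
  \sum_(x : {y | P y}) F (val x) = \sum_(y | P y) F y.
Proof.
rewrite (reindex_omap (val : {y | P y} -> T) insub) /=; last first.
  by move=> i Pi; rewrite insubT.
apply: eq_bigl => -[i Pi] /=; by rewrite insubT Pi /= eqxx.
Qed.

Lemma sum_tupleS (T : finType) n (F : n.+1.-tuple T -> nat) :
  \sum_(a : n.+1.-tuple T) F a = \sum_(x : T) \sum_(b : n.-tuple T) F [tuple of x :: b].
Proof.
rewrite pair_big /=.
rewrite (reindex (fun p : T * n.-tuple T => [tuple of p.1 :: p.2])) /=; last first.
  exists (fun a : n.+1.-tuple T => (thead a, [tuple of behead a])).
  - by move=> [x b] _; congr pair; apply: val_inj.
  - move=> a _; apply: val_inj => /=; by case: a => -[|y s] //= _.
by apply: eq_bigr => -[x b].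
Qed.

Lemma sum_tuple4 (T : finType) (F : 4.-tuple T -> nat) :
  \sum_(a : 4.-tuple T) F a =
  \sum_x0 \sum_x1 \sum_x2 \sum_x3 F [tuple x0; x1; x2; x3].
Proof.
rewrite sum_tupleS; apply: eq_bigr => x0 _.
rewrite sum_tupleS; apply: eq_bigr => x1 _.
rewrite sum_tupleS; apply: eq_bigr => x2 _.
rewrite sum_tupleS; apply: eq_bigr => x3 _.
rewrite (big_pred1 [tuple]) /=; last by move=> b /=; apply/esym/eqP; exact: tuple0.
by congr F; apply: val_inj.
Qed.


Fixpoint cw (G : digraph) (t : nat) (v : dvert G) : nat :=
  if t is t'.+1 then \sum_(w | darc v w) cw t' w else 1.
Arguments cw : clear implicits.

Lemma sum_line (G : digraph) (F : dvert G -> dvert G -> nat) :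
  \sum_(p : line_vert G) F (val p).1 (val p).2 =
  \sum_u \sum_(w | darc u w) F u w.
Proof.
rewrite (sum_sig (fun p : dvert G * dvert G => darc p.1 p.2) (fun p => F p.1 p.2)).
by rewrite pair_big_dep.
Qed.

Lemma cw_line G t (p : line_vert G) :
  cw (line_digraph G) t p = cw G t (val p).2.
Proof.
elim: t p => [//|t IH] p /=.
under eq_bigr => q _ do rewrite IH.
rewrite big_mkcond /=.
rewrite (sum_line (fun u w => if (val p).2 == u then cw G t w else 0)).
rewrite (eq_bigr (fun u => if (val p).2 == u then \sum_(w | darc u w) cw G t w else 0)); last first.
  by move=> u _; case: eqP => // _; rewrite big1.
rewrite -big_mkcond /= (big_pred1 (val p).2) //.

Qed.

Lemma card_iter_line t (G : digraph) :
  #|dvert (iter_line t G)| = \sum_v cw G t v.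
Proof.
elim: t G => [|t IH] G.
  by rewrite /= sum1_card.
rewrite /iter_line iterSr -/(iter_line t _) IH.
under eq_bigr => p _ do rewrite cw_line.
exact: (sum_line (fun u w => cw G t w)).
Qed.


Definition kk (d : nat) (a b : 'I_d.+1) := if a == b then d else d.-1.

Lemma cnt d (a b : 'I_d.+1) :
  \sum_x (((x != a) && (x != b)) : nat) = kk a b.
Proof.
transitivity (\sum_(x in ~: [set a; b]) 1).
  rewrite [RHS]big_mkcond; apply: eq_bigr => x _.
  by rewrite !inE negb_or; case: ifP.
rewrite sum1_card cardsCs setCK card_ord cards2 /kk eq_sym.
by case: eqP => _ /=; rewrite ?subn1 ?subn2.
Qed.

Lemma sum_only (T : finType) (a : T) (H : T -> nat) :
  (forall x, x != a -> H x = 0) -> \sum_x H x = H a.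
Proof. by move=> H0; rewrite (bigD1 a) //= big1 ?addn0. Qed.


Section CK.
Variable d : nat.
Notation T := 'I_d.+1.
Notation "a `_ i" := (nth ord0 (a : seq T) i).

Lemma ck_ok4 (a : 4.-tuple T) :
  ck_ok a = [&& a`_0 != a`_1, a`_1 != a`_2, a`_2 != a`_3 & a`_0 != a`_3].
Proof.
rewrite /ck_ok; apply/idP/idP.
  move=> /andP[/forallP H h03].
  have := H (@Ordinal 4 0 isT); have := H (@Ordinal 4 1 isT);
  have := H (@Ordinal 4 2 isT) => /= -> -> -> /=; exact: h03.
move/and4P=> [h1 h2 h3 h4]; apply/andP; split => //.
by apply/forallP => -[[|[|[|[|i]]]] Hi].
Qed.

Lemma ck_arc4 (v w : ck_vert d 4) :
  ck_arc v w = [&& (val w)`_0 == (val v)`_1, (val w)`_1 == (val v)`_2 &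
                   (val w)`_2 == (val v)`_3].
Proof.
rewrite /ck_arc; apply/idP/idP.
  move=> /forallP H.
  have := H (@Ordinal 4 0 isT); have := H (@Ordinal 4 1 isT);
  have := H (@Ordinal 4 2 isT) => /= -> -> ->; done.
move/and3P=> [h1 h2 h3].
by apply/forallP => -[[|[|[|[|i]]]] Hi].
Qed.

Definition ok4 (x0 x1 x2 x3 : T) := [&& x0 != x1, x1 != x2, x2 != x3 & x0 != x3].

Lemma sum_ck (F : 4.-tuple T -> nat) :
  \sum_(v : ck_vert d 4) F (val v) =
  \sum_x0 \sum_x1 \sum_x2 \sum_x3
     (if ok4 x0 x1 x2 x3 then F [tuple x0; x1; x2; x3] else 0).
Proof.
rewrite (sum_sig (@ck_ok d 4) F) big_mkcond sum_tuple4.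
do 4! (apply: eq_bigr => ? _).
by rewrite ck_ok4.
Qed.
End CK.


Section CK2.
Variable d : nat.
Notation T := 'I_d.+1.

Lemma succ_sum (v : ck_vert d 4) (G : bool -> nat) :
  \sum_(w : ck_vert d 4 | ck_arc v w) G ((nth ord0 (val w) 1) == (nth ord0 (val w) 3)) + G false =
  G true + kk (nth ord0 (val v) 3) (nth ord0 (val v) 1) * G false.
Proof.
set a1 := (nth ord0 (val v) 1); set a2 := (nth ord0 (val v) 2); set a3 := (nth ord0 (val v) 3).
have := valP v; rewrite ck_ok4 -/a1 -/a2 -/a3 => /and4P[h01 h12 h23 h03].
rewrite big_mkcond /=.
under eq_bigr => w _ do rewrite ck_arc4 -/a1 -/a2 -/a3.
rewrite (sum_ck (fun b : 4.-tuple T => if [&& (nth ord0 b 0) == a1, (nth ord0 b 1) == a2 & (nth ord0 b 2) == a3]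
          then G ((nth ord0 b 1) == (nth ord0 b 3)) else 0)) /=.
rewrite (@sum_only _ a1); last first.
  move=> x0 /negbTE H; do 3! (rewrite big1 // => ? _); by rewrite H; case: ifP.
rewrite (@sum_only _ a2); last first.
  move=> x0 /negbTE H; do 2! (rewrite big1 // => ? _); by rewrite H andbF; case: ifP.
rewrite (@sum_only _ a3); last first.
  move=> x0 /negbTE H; do 1! (rewrite big1 // => ? _); by rewrite H !andbF; case: ifP.
rewrite !eqxx /ok4 h12 h23 /=.
have H2 : (a3 != a2) && (a1 != a2) by rewrite eq_sym h23 h12.
have H2' : (a2 != a3) && (a2 != a1) by rewrite h23 eq_sym h12.
rewrite -(cnt a3 a1) big_distrl /= (bigD1 a2) ?H2 // [X in _ = _ + X](bigD1 a2) ?H2' //.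
rewrite /= eqxx mul1n.
rewrite (eq_bigr (fun i => ((i != a3) && (i != a1)) * G false)); last first.
  move=> i Hi; rewrite (eq_sym a2) (negbTE Hi) (eq_sym a3) (eq_sym a1).
  by case: (_ && _); rewrite ?mul1n.
by rewrite -addnA [_ + G false]addnC.
Qed.
End CK2.


Fixpoint en (d t : nat) : nat * nat :=
  if t is t'.+1 then ((en d t').1 + d.-1 * (en d t').2, (en d t').1 + d.-1.-1 * (en d t').2)
  else (1, 1).

Lemma cw_ck d (hd : 0 < d) t (v : ck_vert d 4) :
  cw (CK d 4) t v = if nth ord0 (val v) 1 == nth ord0 (val v) 3 then (en d t).1 else (en d t).2.
Proof.
elim: t v => [|t IH] v; first by case: ifP.
rewrite /=.
under eq_bigr => w _ do rewrite IH.
set G := fun b : bool => if b then (en d t).1 else (en d t).2.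
have := succ_sum v G; rewrite /G /= /kk eq_sym.
have := valP v; rewrite ck_ok4 => /and4P[_ h12 h23 _].
case: eqP => h13 H; apply/(@addIn (en d t).2); rewrite H.
  by rewrite -addnA -mulSnr prednK.
have d2 : 1 < d.
  have h13' : nth ord0 (val v) 1 != nth ord0 (val v) 3 by apply/eqP.
  move: h12 h23 h13' (ltn_ord (nth ord0 (val v) 1)) (ltn_ord (nth ord0 (val v) 2))
    (ltn_ord (nth ord0 (val v) 3)).
  rewrite -!(inj_eq val_inj) => /eqP ? /eqP ? /eqP ? ? ? ?. simpl in *. lia.
rewrite -addnA -mulSnr prednK //; lia.
Qed.


Lemma sum_type d (G : bool -> nat) :
  \sum_(v : ck_vert d 4) G (nth ord0 (val v) 1 == nth ord0 (val v) 3) =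
  d.+1 * (d * d * G true + d * (d.-1 * d.-1) * G false).
Proof.
rewrite (sum_ck (fun b => G (nth ord0 b 1 == nth ord0 b 3))) /=.
rewrite exchange_big /=.
rewrite (eq_bigr (fun x1 => \sum_x3 G (x1 == x3) * (kk x1 x3 * kk x1 x3))); last first.
  move=> x1 _.
  rewrite (eq_bigr (fun x0 => \sum_x3 \sum_x2 (if ok4 x0 x1 x2 x3 then G (x1 == x3) else 0))); last first.
    by move=> x0 _; rewrite exchange_big.
  rewrite exchange_big /=; apply: eq_bigr => x3 _.
  rewrite -cnt big_distrl big_distrr /=; apply: eq_bigr => x0 _.
  rewrite !big_distrr /=; apply: eq_bigr => x2 _.
  rewrite /ok4 (eq_sym x1 x2).
  by case: (x0 != x1); case: (x2 != x1); case: (x2 != x3); case: (x0 != x3);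
    rewrite /= ?muln0 ?muln1.
rewrite (eq_bigr (fun _ => d * d * G true + d * (d.-1 * d.-1) * G false)); last first.
  move=> x1 _; rewrite (bigD1 x1) //= /kk eqxx mulnC; congr (_ + _).
  rewrite (eq_bigr (fun _ => d.-1 * d.-1 * G false)); last first.
    by move=> x3 /negbTE H; rewrite eq_sym H mulnC.
  by rewrite sum_nat_const cardC1 card_ord /= mulnA.
by rewrite sum_nat_const card_ord.
Qed.


Lemma Nt_eq d (hd : 0 < d) t :
  Nt d t = d.+1 * (d * d) * (en d t).1 + d.+1 * (d * (d.-1 * d.-1)) * (en d t).2.
Proof.
rewrite /Nt card_iter_line.
rewrite (eq_bigr _ (fun v _ => cw_ck hd t v)).
have := sum_type d (fun b : bool => if b then (en d t).1 else (en d t).2) => /= ->.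
lia.
Qed.

Lemma Nt2 t : Nt 2 t.+2 = Nt 2 t.+1 + Nt 2 t.
Proof. rewrite !Nt_eq //= ; lia. Qed.

Lemma en1 t : (en 1 t).1 = 1.
Proof. by elim: t => //= t ->. Qed.

Import Order.TTheory GRing.Theory Num.Theory.
Local Open Scope ring_scope.


Lemma rec_real (R : realType) d (hd : (0 < d)%N) t :
  (Nt d t.+2)%:R = (d%:R - 1) * (Nt d t.+1)%:R + (Nt d t)%:R :> R.
Proof.
case: d hd => [//|[|k]] _.
  have H : forall u, Nt 1 u = 2%N by move=> u; rewrite Nt_eq // en1; lia.
  by rewrite !H subrr mul0r add0r.
rewrite !Nt_eq //=.
ring.
Qed.


Theorem proposition3 (R : realType) (d : nat) (hd : (1 <= d)%N) :
  let D : R := d%:R in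
  let s : R := Num.sqrt (D ^+ 2 - 2 * D + 5) in
  let alpha : R := 2^-1 * D * (D + 1) *
        (D ^+ 2 - D + 1 + (D ^+ 3 - 2 * D ^+ 2 + 4 * D - 1) / s) in
  let beta : R := 2^-1 * D * (D + 1) *
        (D ^+ 2 - D + 1 - (D ^+ 3 - 2 * D ^+ 2 + 4 * D - 1) / s) in
  (forall t : nat,
     (Nt d t)%:R = alpha * ((D - 1 + s) / 2) ^+ t + beta * ((D - 1 - s) / 2) ^+ t)
  /\ (d = 2%N ->
      [/\ Nt d 0 = 18%N, Nt d 1 = 30%N &
          forall t : nat, (2 <= t)%N -> Nt d t = (Nt d t.-1 + Nt d t.-2)%N]).
Proof.
move=> D s alpha beta; split; last first.
  move=> d2; subst d; split; [by rewrite Nt_eq | by rewrite Nt_eq |].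
  by case=> [|[|t]] //= _; rewrite Nt2.
have hpos : 0 < D ^+ 2 - 2 * D + 5 by nra.
have hs2 : s ^+ 2 = D ^+ 2 - 2 * D + 5 by rewrite sqr_sqrtr // Order.POrderTheory.ltW.
have hs0 : s != 0 by rewrite gt_eqF // sqrtr_gt0.
have hroot : forall r, (r = (D - 1 + s) / 2 \/ r = (D - 1 - s) / 2) ->
    r ^+ 2 = (D - 1) * r + 1.
  move=> r hr; apply/eqP; rewrite -subr_eq0.
  have -> : r ^+ 2 - ((D - 1) * r + 1) = (s ^+ 2 - (D ^+ 2 - 2 * D + 5)) / 4.
    by case: hr => ->; field.
  by rewrite hs2 subrr mul0r.
set r1 := (D - 1 + s) / 2; set r2 := (D - 1 - s) / 2.
have h1 := hroot r1 (or_introl erefl); have h2 := hroot r2 (or_intror erefl).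
have hd1 : (d.-1)%:R = D - 1 :> R.
  by rewrite /D -{2}(prednK hd) -addn1 natrD addrK.
have base0 : (Nt d 0)%:R = alpha + beta.
  rewrite Nt_eq //= !natrD !natrM hd1 -natr1 -/D /alpha /beta.
  by field.
have hM : forall d : nat, (d.+1 * (d * (d.-1 * d.-1)) * (1 + d.-1.-1 * 1) =
             d.+1 * (d * (d.-1 * d.-1)) * d.-1)%N.
  by case=> [|[|k]] //=; rewrite ?muln0 ?mul0n // muln1 add1n.
have base1 : (Nt d 1)%:R = alpha * r1 + beta * r2.
  rewrite Nt_eq //= hM muln1 add1n (prednK hd) !natrD !natrM hd1 -natr1 -/D /alpha /beta /r1 /r2.
  by field.
suff H : forall t, (Nt d t)%:R = alpha * r1 ^+ t + beta * r2 ^+ t /\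
                   (Nt d t.+1)%:R = alpha * r1 ^+ t.+1 + beta * r2 ^+ t.+1 :> R.
  by move=> t; case: (H t).
elim=> [|t [IH1 IH2]]; first by rewrite !expr0 !mulr1 !expr1.
split => //.
rewrite rec_real // IH1 IH2 /= -/D.
have p : forall r u, r ^+ 2 = (D - 1) * r + 1 ->
    r ^+ u.+2 = (D - 1) * r ^+ u.+1 + r ^+ u.
  by move=> r u hr; rewrite -addn2 exprD hr exprSr; ring.
rewrite (p r1 t h1) (p r2 t h2); ring.
Qed.
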